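(* Let $m\ge o\ge 0$ and $n\ge 0$ be integers with $m+n+o\ge 4$ such that the graph $T_n\vee(K_m+K_o)$ is connected and is neither a complete graph nor a complete bipartite graph. Let the vertices of $K_m$, $T_n$, $K_o$ carry the indeterminates $x_1,\dots,x_m$, $y_1,\dots,y_n$, $z_1,\dots,z_o$ respectively. Then the third critical ideal $I_3=I_3(T_n\vee(K_m+K_o),\{X,Y,Z\})$ is: - $\langle 2, x_1+1,\dots,x_m+1, y_1,\dots,y_n, z_1+1,\dots,z_o+1\rangle$ if $m,n,o\ge 2$; - $\langle x_1+1,\dots,x_m+1, y_1+2, z_1+1,\dots,z_o+1\rangle$ if $m\ge 2$, $n=1$, $o\ge 2$; - $\langle x_1+1,\dots,x_m+1, y_1,\dots,y_n, z_1-1\rangle$ if $m\ge 2$, $n\ge 2$, $o=1$; - $\langle x_1+z_1, y_1,\dots,y_n\rangle$ if $m=1$, $n\ge 3$, $o=1$; - $\langle x_1+z_1,\ y_1+y_2,\ y_2z_1\rangle$ if $m=1$, $n=2$, $o=1$; - $\langle x_1+1,\dots,x_m+1,\ z_1y_1+z_1-1\rangle$ if $m\ge 2$, $n=1$, $o=1$; - $\langle x_1+1,\dots,x_m+1, y_1,\dots,y_n\rangle$ if $m\ge 3$, $n\ge 3$, $o=0$; - $\langle x_1+x_2+2, y_1,\dots,y_n\rangle$ if $m=2$, $n\ge 3$, $o=0$; - $\langle x_1+1,\dots,x_m+1,\ y_1y_2+y_1+y_2\rangle$ if $m\ge 3$, $n=2$, $o=0$; - $\langle x_1+x_2+2,\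 x_2y_1+y_1,\ x_2y_2+y_2,\ y_1y_2+y_1+y_2\rangle$ if $m=2$, $n=2$, $o=0$.
   Context: For a finite graph $G$ with an indeterminate $x_u$ for each vertex $u$, the generalized Laplacian matrix $L(G,X_G)$ is the matrix indexed by $V(G)$ with $(u,u)$-entry $x_u$ and $(u,v)$-entry $-m_{uv}$ for $u\ne v$, $m_{uv}$ being the number of edges between $u$ and $v$. The third critical ideal $I_3(G,X_G)$ is the ideal of $\mathbb{Z}[X_G]$ generated by all $3\times 3$ minors of $L(G,X_G)$. $T_n$ is the edgeless graph on $n$ vertices, $K_m$ the complete graph on $m$ vertices ($K_0$ is empty), $+$ denotes disjoint union and $G\vee H$ the join (disjoint union plus all edges between $G$ and $H$). *)

(* Defs.v *)
From HB Require Import structures.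
From mathcomp Require Import all_boot all_order all_algebra.
From mathcomp Require Import mpoly.
Set Implicit Arguments. Unset Strict Implicit. Unset Printing Implicit Defensive.
Import GRing.Theory.
Local Open Scope ring_scope.

Definition graph_connected (T : finType) (e : rel T) : Prop :=
  forall u v : T, connect e u v.
Definition graph_complete (T : finType) (e : rel T) : Prop :=
  forall u v : T, u != v -> e u v.
Definition graph_complete_bipartite (T : finType) (e : rel T) : Prop :=
  exists A : {set T}, [/\ A != set0, ~: A != set0 &
    forall u v : T, e u v = ((u \in A) != (v \in A))].

(* ---------- the graph T_n \/ (K_m + K_o) ----------
   Vertex set 'I_(m+n+o): vertices 0..m-1 form K_m (class 0),
   m..m+n-1 form T_n (class 1), m+n..m+n+o-1 form K_o (class 2). *)
Definition vclass (m n o : nat) (u : 'I_(m + n + o)) : nat :=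
  if (u < m)%N then 0%N else if (u < m + n)%N then 1%N else 2%N.

Definition joinG (m n o : nat) : rel 'I_(m + n + o) :=
  fun u v => (u != v) &&
    [|| (vclass u == 0%N) && (vclass v == 0%N),
        (vclass u == 2%N) && (vclass v == 2%N)
      | (vclass u == 1%N) != (vclass v == 1%N)].

Definition gen_laplacian (N : nat) (e : rel 'I_N) : 'M[{mpoly int[N]}]_N :=
  \matrix_(u, v) (if u == v then 'X_u else - ((e u v : nat)%:R)).

Definition ideal_gen (R : comRingType) (S : R -> Prop) (p : R) : Prop :=
  exists (k : nat) (c g : 'I_k -> R),
    (forall i, S (g i)) /\ p = \sum_(i < k) c i * g i.

Definition same_ideal (R : comRingType) (S S' : R -> Prop) : Prop :=
  forall p : R, ideal_gen S p <-> ideal_gen S' p.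

Definition is_minor3 (R : comRingType) (N : nat) (L : 'M[R]_N) (p : R) : Prop :=
  exists f g : 'I_3 -> 'I_N,
    [/\ (forall i j : 'I_3, (i < j)%N -> (f i < f j)%N),
        (forall i j : 'I_3, (i < j)%N -> (g i < g j)%N) &
        p = \det (\matrix_(i, j) L (f i) (g j))].

Definition crit3_gens (N : nat) (e : rel 'I_N) : {mpoly int[N]} -> Prop :=
  is_minor3 (gen_laplacian e).

(* the variable attached to vertex k (0-based); 0 if out of range (never used so) *)
Definition Xv (N k : nat) : {mpoly int[N]} :=
  if insub k is Some i then 'X_i else 0.

(* 1-based names: x_i (K_m), y_j (T_n), z_k (K_o) *)
Definition vx (m n o i : nat) : {mpoly int[m + n + o]} := Xv (m + n + o) (i.-1).
Definition vy (m n o j : nat) : {mpoly int[m + n + o]} := Xv (m + n + o) (m + j).-1.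
Definition vz (m n o k : nat) : {mpoly int[m + n + o]} := Xv (m + n + o) (m + n + k).-1.

Arguments joinG : clear implicits.
Arguments vx : clear implicits.
Arguments vy : clear implicits.
Arguments vz : clear implicits.
Arguments Xv : clear implicits.

(* Main.v *)
Require Import Defs.
From HB Require Import structures.
From mathcomp Require Import all_boot all_order all_algebra.
From mathcomp Require Import mpoly.
From mathcomp Require Import ring zify.
Import GRing.Theory.
Local Open Scope ring_scope.
Set Implicit Arguments. Unset Strict Implicit.
Section Det.
Variable R : comRingType.
Definition mxn {n} (A : 'M[R]_n.+1) (i j : nat) := A (inord i) (inord j).
Lemma mxnE {n} (A : 'M[R]_n.+1) i j : A i j = mxn A (val i) (val j).
Proof. by rewrite /mxn !inord_val. Qed.
Lemma det2 (B : 'M[R]_2) : \det B = B 0 0 * B 1 1 - B 0 1 * B 1 0.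
Proof.
rewrite (expand_det_row _ 0) !big_ord_recr big_ord0 /= add0r /cofactor.
rewrite !det_mx11 !mxE /= !(mxnE B) /=.
rewrite expr0 expr1; ring.
Qed.
Lemma det3 (A : 'M[R]_3) : \det A =
  A 0 0 * (A 1 1 * A 2 2 - A 1 2 * A 2 1)
  - A 0 1 * (A 1 0 * A 2 2 - A 1 2 * A 2 0)
  + A 0 2 * (A 1 0 * A 2 1 - A 1 1 * A 2 0).
Proof.
rewrite (expand_det_row _ 0) !big_ord_recr big_ord0 /= add0r /cofactor.
rewrite !det2 !mxE /= !(mxnE A) /=.
rewrite expr0 expr1 expr2; ring.
Qed.
End Det.
Section Ideal.
Variable R : comRingType.
Implicit Types (S T : R -> Prop) (a b p : R).

Lemma ig0 S : ideal_gen S 0.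
Proof. by exists 0%N, (fun _ => 0), (fun i : 'I_0 => 0); split; [case | rewrite big_ord0]. Qed.

Lemma igS S a : S a -> ideal_gen S a.
Proof. by move=> Sa; exists 1%N, (fun _ => 1), (fun _ => a); split => //; rewrite big_ord1 mul1r. Qed.

Lemma igD S a b : ideal_gen S a -> ideal_gen S b -> ideal_gen S (a + b).
Proof.
move=> [k1 [c1 [g1 [H1 ->]]]] [k2 [c2 [g2 [H2 ->]]]].
exists (k1 + k2)%N, (fun i => match split i with inl j => c1 j | inr j => c2 j end),
  (fun i => match split i with inl j => g1 j | inr j => g2 j end); split.
  by move=> i; case: (split i).
rewrite big_split_ord /=; congr (_ + _); apply: eq_bigr => i _.
  by rewrite (unsplitK (inl _ i)).
by rewrite (unsplitK (inr _ i)).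
Qed.

Lemma igM S r a : ideal_gen S a -> ideal_gen S (r * a).
Proof.
move=> [k [c [g [H ->]]]]; exists k, (fun i => r * c i), g; split => //.
by rewrite big_distrr /=; apply: eq_bigr => i _; rewrite mulrA.
Qed.

Lemma igMr S r a : ideal_gen S a -> ideal_gen S (a * r).
Proof. by rewrite mulrC; apply: igM. Qed.

Lemma igN S a : ideal_gen S a -> ideal_gen S (- a).
Proof. by move=> h; rewrite -mulN1r; apply: igM. Qed.

Lemma igB S a b : ideal_gen S a -> ideal_gen S b -> ideal_gen S (a - b).
Proof. by move=> ha hb; apply: igD => //; apply: igN. Qed.

Lemma ig_sum S k (f : 'I_k -> R) : (forall i, ideal_gen S (f i)) -> ideal_gen S (\sum_(i < k) f i).
Proof.
move=> h; elim/big_ind: _ => //; [exact: ig0 | exact: igD].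
Qed.

Lemma ig_trans S T p : (forall a, T a -> ideal_gen S a) -> ideal_gen T p -> ideal_gen S p.
Proof.
move=> hT [k [c [g [H ->]]]]; apply: ig_sum => i; apply: igM; exact: hT.
Qed.

Lemma same_idealP S T : (forall a, S a -> ideal_gen T a) -> (forall a, T a -> ideal_gen S a) -> same_ideal S T.
Proof. by move=> h1 h2 p; split; apply: ig_trans. Qed.

Lemma ig_eq S a b : a = b -> ideal_gen S a -> ideal_gen S b.
Proof. by move=> ->. Qed.

Definition cng S a b := ideal_gen S (a - b).
Lemma cng_refl S a : cng S a a.
Proof. by rewrite /cng subrr; apply: ig0. Qed.
Lemma cngD S a b c d : cng S a b -> cng S c d -> cng S (a + c) (b + d).
Proof. move=> h1 h2; rewrite /cng (_ : _ - _ = (a - b) + (c - d)); [exact: igD | ring]. Qed.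
Lemma cngN S a b : cng S a b -> cng S (- a) (- b).
Proof. move=> h; rewrite /cng (_ : _ - _ = - (a - b)); [exact: igN | ring]. Qed.
Lemma cngB S a b c d : cng S a b -> cng S c d -> cng S (a - c) (b - d).
Proof. by move=> h1 h2; apply: cngD => //; apply: cngN. Qed.
Lemma cngM S a b c d : cng S a b -> cng S c d -> cng S (a * c) (b * d).
Proof.
move=> h1 h2; rewrite /cng (_ : _ - _ = (a - b) * c + b * (c - d)); last ring.
by apply: igD; [apply: igMr | apply: igM].
Qed.
Lemma cng_ig S a b : cng S a b -> ideal_gen S b -> ideal_gen S a.
Proof. move=> h hb; rewrite (_ : a = (a - b) + b); [exact: igD | ring]. Qed.
End Ideal.

Section Minors.
Variable R : comRingType.
Variable N : nat.
Variable L : 'M[R]_N.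

Definition dd (a0 a1 a2 b0 b1 b2 : 'I_N) : R :=
  L a0 b0 * (L a1 b1 * L a2 b2 - L a1 b2 * L a2 b1)
  - L a0 b1 * (L a1 b0 * L a2 b2 - L a1 b2 * L a2 b0)
  + L a0 b2 * (L a1 b0 * L a2 b1 - L a1 b1 * L a2 b0).

Definition mk3 (a0 a1 a2 : 'I_N) (i : 'I_3) : 'I_N :=
  match val i with 0 => a0 | 1 => a1 | _ => a2 end.

Lemma minor_dd (f g : 'I_3 -> 'I_N) :
  \det (\matrix_(i, j) L (f i) (g j)) = dd (f 0) (f 1) (f 2) (g 0) (g 1) (g 2).
Proof. by rewrite det3 !mxE. Qed.

Lemma sorted_minor (a0 a1 a2 b0 b1 b2 : 'I_N) :
  (a0 < a1 < a2)%N -> (b0 < b1 < b2)%N -> is_minor3 L (dd a0 a1 a2 b0 b1 b2).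
Proof.
move=> /andP[ha1 ha2] /andP[hb1 hb2].
exists (mk3 a0 a1 a2), (mk3 b0 b1 b2); split.
- by case=> [[|[|[|]]]] // ? [[|[|[|]]]] //= ?; rewrite ?(ltn_trans ha1 ha2).
- by case=> [[|[|[|]]]] // ? [[|[|[|]]]] //= ?; rewrite ?(ltn_trans hb1 hb2).
by rewrite minor_dd.
Qed.

Lemma sort3 (Q : 'I_N -> 'I_N -> 'I_N -> Prop) :
  (forall a0 a1 a2 : 'I_N, (a0 < a1 < a2)%N -> Q a0 a1 a2) ->
  (forall a0 a1 a2 : 'I_N, Q a1 a0 a2 -> Q a0 a1 a2) ->
  (forall a0 a1 a2 : 'I_N, Q a0 a2 a1 -> Q a0 a1 a2) ->
  forall a0 a1 a2 : 'I_N, a0 != a1 -> a0 != a2 -> a1 != a2 -> Q a0 a1 a2.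
Proof.
move=> hs h01 h12 a0 a1 a2 n01 n02 n12.
have lt : forall u v : 'I_N, u != v -> (u < v)%N \/ (v < u)%N.
  move=> u v; rewrite neq_ltn; case/orP; by [left | right].
case: (lt _ _ n01) => o01; case: (lt _ _ n02) => o02; case: (lt _ _ n12) => o12.
- by apply: (hs); apply/andP; split.
- by apply: (h12); apply: (hs); apply/andP; split.
- exfalso; lia.
- by apply: (h12); apply: (h01); apply: (hs); apply/andP; split.
- by apply: (h01); apply: (hs); apply/andP; split.
- exfalso; lia.
- by apply: (h01); apply: (h12); apply: (hs); apply/andP; split.
- by apply: (h01); apply: (h12); apply: (h01); apply: (hs); apply/andP; split.
Qed.

Lemma any_minor (a0 a1 a2 b0 b1 b2 : 'I_N) :
  a0 != a1 -> a0 != a2 -> a1 != a2 -> b0 != b1 -> b0 != b2 -> b1 != b2 ->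
  ideal_gen (is_minor3 L) (dd a0 a1 a2 b0 b1 b2).
Proof.
move=> n01 n02 n12 m01 m02 m12.
have neg : forall p, ideal_gen (is_minor3 L) (- p) -> ideal_gen (is_minor3 L) p.
  by move=> p /igN; rewrite opprK.
pose Q a0 a1 a2 := forall b0 b1 b2, b0 != b1 -> b0 != b2 -> b1 != b2 ->
  ideal_gen (is_minor3 L) (dd a0 a1 a2 b0 b1 b2).
apply: (@sort3 Q) => //.
- move=> c0 c1 c2 hc; apply: (@sort3 (fun b0 b1 b2 => ideal_gen (is_minor3 L) (dd c0 c1 c2 b0 b1 b2))).
  + by move=> d0 d1 d2 hd; apply: igS; apply: sorted_minor.
  + move=> d0 d1 d2 h; apply: neg; move: h; congr ideal_gen; rewrite /dd; ring.
  + move=> d0 d1 d2 h; apply: neg; move: h; congr ideal_gen; rewrite /dd; ring.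
- move=> c0 c1 c2 h d0 d1 d2 e1 e2 e3; apply: neg; move: (h d0 d1 d2 e1 e2 e3); congr ideal_gen; rewrite /dd; ring.
- move=> c0 c1 c2 h d0 d1 d2 e1 e2 e3; apply: neg; move: (h d0 d1 d2 e1 e2 e3); congr ideal_gen; rewrite /dd; ring.
Qed.

Lemma minors_in K (c : 'I_N -> 'I_K) (M : 'M[R]_K) (S : R -> Prop) :
  (forall u v, cng S (L u v) (M (c u) (c v))) ->
  (forall f g : 'I_3 -> 'I_N, (forall i j : 'I_3, (i < j)%N -> (f i < f j)%N) ->
     (forall i j : 'I_3, (i < j)%N -> (g i < g j)%N) ->
     ideal_gen S (\det (\matrix_(i, j) M (c (f i)) (c (g j))))) ->
  forall p, is_minor3 L p -> ideal_gen S p.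
Proof.
move=> hc hM p [f [g [hf hg ->]]].
apply: cng_ig (hM f g hf hg).
rewrite minor_dd det3 !mxE /dd.
by repeat first [apply: cngD | apply: cngN | apply: cngM | apply: hc].
Qed.

Lemma det_sub3 (M : 'M[R]_3) (S : R -> Prop) (a b : 'I_3 -> 'I_3) :
  ideal_gen S (\det M) -> ideal_gen S (\det (\matrix_(i, j) M (a i) (b j))).
Proof.
move=> h.
have -> : \matrix_(i, j) M (a i) (b j) = rowsub a 1%:M *m (M *m colsub b 1%:M).
  by rewrite mulmx_colsub mulmx1 -rowsubE; apply/matrixP => i j; rewrite !mxE.
by rewrite !det_mulmx; apply: igM; apply: igMr.
Qed.
End Minors.

Ltac dec := repeat match goal with
  | |- context [@eq_op _ ?a ?b] =>
      let t := type of a in constr_eq t nat;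
      let H := fresh in
      first [ (have H : (a == b) = false by apply/eqP; lia)
            | (have H : (a == b) = true by apply/eqP; lia) ];
      rewrite H; clear H
  | |- context [(?a < ?b)%N] =>
      let H := fresh in
      first [ (have H : (a < b)%N = false by apply/negbTE; rewrite -leqNgt; lia)
            | (have H : (a < b)%N = true by lia) ];
      rewrite H; clear H
  end.

Definition hide (P : Prop) := P.

Section Graph.
Variables m n o : nat.
Local Notation N := (m + n + o)%N.
Local Notation L := (gen_laplacian (joinG m n o)).
Local Notation PR := {mpoly int[N]}.

Definition vcl (k : nat) : nat := if (k < m)%N then 0%N else if (k < m + n)%N then 1%N else 2%N.
Definition R3 (k l : nat) : bool :=
  [|| (k == 0%N) && (l == 0%N), (k == 2%N) && (l == 2%N) | (k == 1%N) != (l == 1%N)].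

Lemma Lval (u v : 'I_N) : L u v =
  if val u == val v then 'X_u
  else - (((val u != val v) && R3 (vcl (val u)) (vcl (val v)) : nat)%:R).
Proof. by rewrite /gen_laplacian mxE. Qed.

Lemma XvE (u : 'I_N) : Xv N (val u) = 'X_u.
Proof. by rewrite /Xv valK. Qed.

Lemma Xv_ex k : (k < N)%N -> exists u : 'I_N, val u = k /\ Xv N k = 'X_u.
Proof. move=> h; exists (Ordinal h); split => //; exact: (XvE (Ordinal h)). Qed.

Let I3 := crit3_gens (joinG m n o).

Definition cls (u : 'I_N) : 'I_3 := inord (vcl (val u)).
Definition Mstd (d : nat -> PR) : 'M[PR]_3 :=
  \matrix_(k, l) if val k == val l then d (val k) else - ((R3 k l : nat)%:R).

Lemma vcl_lt k : (vcl k < 3)%N.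
Proof. by rewrite /vcl; case: ifP => //; case: ifP. Qed.

Lemma clsE (u : 'I_N) : val (cls u) = vcl (val u).
Proof. by apply: inordK; exact: vcl_lt. Qed.

Lemma std_in (S : PR -> Prop) d :
  (forall u : 'I_N, cng S 'X_u (d (vcl (val u)))) ->
  (forall u v : 'I_N, val u != val v -> vcl (val u) = vcl (val v) ->
      cng S (- ((R3 (vcl (val u)) (vcl (val u)) : nat)%:R)) (d (vcl (val u)))) ->
  ideal_gen S (\det (Mstd d)) ->
  forall p, I3 p -> ideal_gen S p.
Proof.
move=> h1 h2 h3; apply: (@minors_in _ _ _ _ cls (Mstd d)).
  move=> u v; rewrite Lval /Mstd mxE !clsE.
  case: eqP => [/val_inj <- | /eqP huv]; first by rewrite eqxx; apply: h1.
  case: (eqVneq (vcl (val u)) (vcl (val v))) => [e | ne].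
    by rewrite -e /=; exact: (h2 u v huv e).
  by apply: cng_refl.
move=> f g _ _.
by apply: (@det_sub3 _ (Mstd d) S (fun i => cls (f i)) (fun j => cls (g j))).
Qed.

Lemma Xx (u : 'I_N) : (val u < m)%N -> 'X_u = vx m n o (val u).+1.
Proof. by move=> _; rewrite /vx /= XvE. Qed.
Lemma Xy (u : 'I_N) : (m <= val u < m + n)%N -> 'X_u = vy m n o (val u - m).+1.
Proof. move=> h; rewrite /vy (_ : (m + (val u - m).+1).-1 = val u); [by rewrite XvE | lia]. Qed.
Lemma Xz (u : 'I_N) : (m + n <= val u)%N -> 'X_u = vz m n o (val u - m - n).+1.
Proof. move=> h; have := ltn_ord u; move=> hu.
rewrite /vz (_ : (m + n + (val u - m - n).+1).-1 = val u); [by rewrite XvE | lia]. Qed.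

Lemma vcl0 k : vcl k = 0%N -> (k < m)%N.
Proof. by rewrite /vcl; case: (ltnP k m) => h1; case: (ltnP k (m + n)) => h2 /= e; lia. Qed.
Lemma vcl1 k : vcl k = 1%N -> (m <= k < m + n)%N.
Proof. by rewrite /vcl; case: (ltnP k m) => h1; case: (ltnP k (m + n)) => h2 /= e; lia. Qed.
Lemma vcl2 k : vcl k = 2%N -> (m + n <= k)%N.
Proof. by rewrite /vcl; case: (ltnP k m) => h1; case: (ltnP k (m + n)) => h2 /= e; lia. Qed.
Lemma vcl_cases k : [\/ vcl k = 0%N, vcl k = 1%N | vcl k = 2%N].
Proof. by rewrite /vcl; case: ifP => _; [constructor 1|case: ifP => _; [constructor 2|constructor 3]]. Qed.

Lemma cngX (S : PR -> Prop) (u : 'I_N) :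
  (forall i, (0 < i <= m)%N -> ideal_gen S (vx m n o i + 1)) -> (val u < m)%N -> cng S 'X_u (-1).
Proof. move=> h hu; rewrite /cng opprK (Xx hu); apply: h; lia. Qed.
Lemma cngY (S : PR -> Prop) (u : 'I_N) :
  (forall j, (0 < j <= n)%N -> ideal_gen S (vy m n o j)) -> (m <= val u < m + n)%N -> cng S 'X_u 0.
Proof. move=> h hu; rewrite /cng subr0 (Xy hu); apply: h; lia. Qed.
Lemma cngZ (S : PR -> Prop) (u : 'I_N) :
  (forall k, (0 < k <= o)%N -> ideal_gen S (vz m n o k + 1)) -> (m + n <= val u)%N -> cng S 'X_u (-1).
Proof. move=> h hu; have hu' : (val u < m + n + o)%N := ltn_ord u; rewrite /cng opprK (Xz hu); apply: h; lia. Qed.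

Lemma vclx k : (k < m)%N -> vcl k = 0%N.
Proof. by rewrite /vcl => ->. Qed.
Lemma vcly k : (m <= k < m + n)%N -> vcl k = 1%N.
Proof. by move=> /andP[h1 h2]; rewrite /vcl ltnNge h1 h2. Qed.
Lemma vclz k : (m + n <= k)%N -> vcl k = 2%N.
Proof. move=> h; rewrite /vcl ifF ?ifF //; apply/negbTE; rewrite -leqNgt //; lia. Qed.

Lemma c_x1 (i a : nat) :
  (0 < i <= m)%N -> (0 < a <= m)%N -> i != a -> (0 < n)%N -> (0 < o)%N ->
  ideal_gen I3 (vx m n o i + 1).
Proof.
move=> H0 H1 H2 H3 H4; rewrite /vx /vy /vz.
have N2 : hide (i != a) := H2; clear H2.
have [r0 [h0 E0]] := @Xv_ex (i.-1) ltac:(lia).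
have k0 : vcl (val r0) = 0%N by rewrite h0; apply: vclx; lia.
have [r1 [h1 E1]] := @Xv_ex (a.-1) ltac:(lia).
have k1 : vcl (val r1) = 0%N by rewrite h1; apply: vclx; lia.
have [r2 [h2 E2]] := @Xv_ex (m) ltac:(lia).
have k2 : vcl (val r2) = 1%N by rewrite h2; apply: vcly; lia.
have [r3 [h3 E3]] := @Xv_ex (m + n) ltac:(lia).
have k3 : vcl (val r3) = 2%N by rewrite h3; apply: vclz; lia.
have d0_1 : (val r0 == val r1) = false by rewrite h0 h1; apply/eqP; move: (N2 : i != a) => ?; lia.
have d0_2 : (val r0 == val r2) = false by rewrite h0 h2; apply/eqP; lia.
have d0_3 : (val r0 == val r3) = false by rewrite h0 h3; apply/eqP; lia.
have d1_0 : (val r1 == val r0) = false by rewrite h1 h0; apply/eqP; move: (N2 : i != a) => ?; lia.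
have d1_2 : (val r1 == val r2) = false by rewrite h1 h2; apply/eqP; lia.
have d1_3 : (val r1 == val r3) = false by rewrite h1 h3; apply/eqP; lia.
have d2_0 : (val r2 == val r0) = false by rewrite h2 h0; apply/eqP; lia.
have d2_3 : (val r2 == val r3) = false by rewrite h2 h3; apply/eqP; lia.
have d3_2 : (val r3 == val r2) = false by rewrite h3 h2; apply/eqP; lia.
rewrite ?E0 ?E1 ?E2 ?E3.
have := @any_minor _ _ L r0 r1 r2 r0 r3 r2.
rewrite -!(inj_eq val_inj).
move=> /(_ (negbT d0_1) (negbT d0_2) (negbT d1_2) (negbT d0_3) (negbT d0_2) (negbT d3_2)).
rewrite /dd !Lval ?eqxx ?d0_1 ?d0_2 ?d0_3 ?d1_0 ?d1_2 ?d1_3 ?d2_0 ?d2_3 ?d3_2 ?k0 ?k1 ?k2 ?k3 /R3 /=.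
move=> H; apply: (ig_eq _ (igM (-1) H)); ring.
Qed.

Lemma c_x2 (i a b : nat) :
  (0 < i <= m)%N -> (0 < a <= m)%N -> (0 < b <= m)%N -> i != a -> i != b -> a != b -> (1 < n)%N ->
  ideal_gen I3 (vx m n o i + 1).
Proof.
move=> H0 H1 H2 H3 H4 H5 H6; rewrite /vx /vy /vz.
have N3 : hide (i != a) := H3; clear H3.
have N4 : hide (i != b) := H4; clear H4.
have N5 : hide (a != b) := H5; clear H5.
have [r0 [h0 E0]] := @Xv_ex (i.-1) ltac:(lia).
have k0 : vcl (val r0) = 0%N by rewrite h0; apply: vclx; lia.
have [r1 [h1 E1]] := @Xv_ex (a.-1) ltac:(lia).
have k1 : vcl (val r1) = 0%N by rewrite h1; apply: vclx; lia.
have [r2 [h2 E2]] := @Xv_ex (b.-1) ltac:(lia).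
have k2 : vcl (val r2) = 0%N by rewrite h2; apply: vclx; lia.
have [r3 [h3 E3]] := @Xv_ex (m) ltac:(lia).
have k3 : vcl (val r3) = 1%N by rewrite h3; apply: vcly; lia.
have [r4 [h4 E4]] := @Xv_ex (m.+1) ltac:(lia).
have k4 : vcl (val r4) = 1%N by rewrite h4; apply: vcly; lia.
have d0_1 : (val r0 == val r1) = false by rewrite h0 h1; apply/eqP; move: (N3 : i != a) => ?; lia.
have d0_2 : (val r0 == val r2) = false by rewrite h0 h2; apply/eqP; move: (N4 : i != b) => ?; lia.
have d0_3 : (val r0 == val r3) = false by rewrite h0 h3; apply/eqP; lia.
have d0_4 : (val r0 == val r4) = false by rewrite h0 h4; apply/eqP; lia.
have d1_0 : (val r1 == val r0) = false by rewrite h1 h0; apply/eqP; move: (N3 : i != a) => ?; lia.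
have d1_2 : (val r1 == val r2) = false by rewrite h1 h2; apply/eqP; move: (N5 : a != b) => ?; lia.
have d1_3 : (val r1 == val r3) = false by rewrite h1 h3; apply/eqP; lia.
have d1_4 : (val r1 == val r4) = false by rewrite h1 h4; apply/eqP; lia.
have d2_4 : (val r2 == val r4) = false by rewrite h2 h4; apply/eqP; lia.
have d3_0 : (val r3 == val r0) = false by rewrite h3 h0; apply/eqP; lia.
have d3_2 : (val r3 == val r2) = false by rewrite h3 h2; apply/eqP; lia.
have d3_4 : (val r3 == val r4) = false by rewrite h3 h4; apply/eqP; lia.
rewrite ?E0 ?E1 ?E2 ?E3 ?E4.
have := @any_minor _ _ L r0 r1 r3 r0 r2 r4.
rewrite -!(inj_eq val_inj).
move=> /(_ (negbT d0_1) (negbT d0_3) (negbT d1_3) (negbT d0_2) (negbT d0_4) (negbT d2_4)).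
rewrite /dd !Lval ?eqxx ?d0_1 ?d0_2 ?d0_3 ?d0_4 ?d1_0 ?d1_2 ?d1_3 ?d1_4 ?d2_4 ?d3_0 ?d3_2 ?d3_4 ?k0 ?k1 ?k2 ?k3 ?k4 /R3 /=.
move=> H; apply: (ig_eq _ (igM (-1) H)); ring.
Qed.

Lemma c_xx  :
  (1 < m)%N -> (1 < n)%N ->
  ideal_gen I3 (vx m n o 1 + vx m n o 2 + 2).
Proof.
move=> H0 H1; rewrite /vx /vy /vz.
have [r0 [h0 E0]] := @Xv_ex ((1).-1) ltac:(lia).
have k0 : vcl (val r0) = 0%N by rewrite h0; apply: vclx; lia.
have [r1 [h1 E1]] := @Xv_ex ((2).-1) ltac:(lia).
have k1 : vcl (val r1) = 0%N by rewrite h1; apply: vclx; lia.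
have [r2 [h2 E2]] := @Xv_ex (m) ltac:(lia).
have k2 : vcl (val r2) = 1%N by rewrite h2; apply: vcly; lia.
have [r3 [h3 E3]] := @Xv_ex (m.+1) ltac:(lia).
have k3 : vcl (val r3) = 1%N by rewrite h3; apply: vcly; lia.
have d0_1 : (val r0 == val r1) = false by rewrite h0 h1; apply/eqP; lia.
have d0_2 : (val r0 == val r2) = false by rewrite h0 h2; apply/eqP; lia.
have d0_3 : (val r0 == val r3) = false by rewrite h0 h3; apply/eqP; lia.
have d1_0 : (val r1 == val r0) = false by rewrite h1 h0; apply/eqP; lia.
have d1_2 : (val r1 == val r2) = false by rewrite h1 h2; apply/eqP; lia.
have d1_3 : (val r1 == val r3) = false by rewrite h1 h3; apply/eqP; lia.
have d2_0 : (val r2 == val r0) = false by rewrite h2 h0; apply/eqP; lia.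
have d2_1 : (val r2 == val r1) = false by rewrite h2 h1; apply/eqP; lia.
have d2_3 : (val r2 == val r3) = false by rewrite h2 h3; apply/eqP; lia.
rewrite ?E0 ?E1 ?E2 ?E3.
have := @any_minor _ _ L r0 r1 r2 r0 r1 r3.
rewrite -!(inj_eq val_inj).
move=> /(_ (negbT d0_1) (negbT d0_2) (negbT d1_2) (negbT d0_1) (negbT d0_3) (negbT d1_3)).
rewrite /dd !Lval ?eqxx ?d0_1 ?d0_2 ?d0_3 ?d1_0 ?d1_2 ?d1_3 ?d2_0 ?d2_1 ?d2_3 ?k0 ?k1 ?k2 ?k3 /R3 /=.
move=> H; apply: (ig_eq _ (igM (-1) H)); ring.
Qed.

Lemma c_y1 (j a b : nat) :
  (0 < m)%N -> (0 < j <= n)%N -> (0 < a <= n)%N -> (0 < b <= n)%N -> j != a -> j != b -> a != b ->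
  ideal_gen I3 (vy m n o j).
Proof.
move=> H0 H1 H2 H3 H4 H5 H6; rewrite /vx /vy /vz.
have N4 : hide (j != a) := H4; clear H4.
have N5 : hide (j != b) := H5; clear H5.
have N6 : hide (a != b) := H6; clear H6.
have [r0 [h0 E0]] := @Xv_ex (0) ltac:(lia).
have k0 : vcl (val r0) = 0%N by rewrite h0; apply: vclx; lia.
have [r1 [h1 E1]] := @Xv_ex ((m + j).-1) ltac:(lia).
have k1 : vcl (val r1) = 1%N by rewrite h1; apply: vcly; lia.
have [r2 [h2 E2]] := @Xv_ex ((m + a).-1) ltac:(lia).
have k2 : vcl (val r2) = 1%N by rewrite h2; apply: vcly; lia.
have [r3 [h3 E3]] := @Xv_ex ((m + b).-1) ltac:(lia).
have k3 : vcl (val r3) = 1%N by rewrite h3; apply: vcly; lia.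
have d0_1 : (val r0 == val r1) = false by rewrite h0 h1; apply/eqP; lia.
have d0_2 : (val r0 == val r2) = false by rewrite h0 h2; apply/eqP; lia.
have d0_3 : (val r0 == val r3) = false by rewrite h0 h3; apply/eqP; lia.
have d1_0 : (val r1 == val r0) = false by rewrite h1 h0; apply/eqP; lia.
have d1_2 : (val r1 == val r2) = false by rewrite h1 h2; apply/eqP; move: (N4 : j != a) => ?; lia.
have d1_3 : (val r1 == val r3) = false by rewrite h1 h3; apply/eqP; move: (N5 : j != b) => ?; lia.
have d2_0 : (val r2 == val r0) = false by rewrite h2 h0; apply/eqP; lia.
have d2_1 : (val r2 == val r1) = false by rewrite h2 h1; apply/eqP; move: (N4 : j != a) => ?; lia.
have d2_3 : (val r2 == val r3) = false by rewrite h2 h3; apply/eqP; move: (N6 : a != b) => ?; lia.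
rewrite ?E0 ?E1 ?E2 ?E3.
have := @any_minor _ _ L r0 r1 r2 r0 r1 r3.
rewrite -!(inj_eq val_inj).
move=> /(_ (negbT d0_1) (negbT d0_2) (negbT d1_2) (negbT d0_1) (negbT d0_3) (negbT d1_3)).
rewrite /dd !Lval ?eqxx ?d0_1 ?d0_2 ?d0_3 ?d1_0 ?d1_2 ?d1_3 ?d2_0 ?d2_1 ?d2_3 ?k0 ?k1 ?k2 ?k3 /R3 /=.
move=> H; apply: (ig_eq _ (igM (-1) H)); ring.
Qed.

Lemma c_y2 (j b : nat) :
  (1 < m)%N -> (0 < j <= n)%N -> (0 < b <= n)%N -> j != b -> (0 < o)%N ->
  ideal_gen I3 (vy m n o j).
Proof.
move=> H0 H1 H2 H3 H4; rewrite /vx /vy /vz.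
have N3 : hide (j != b) := H3; clear H3.
have [r0 [h0 E0]] := @Xv_ex (0) ltac:(lia).
have k0 : vcl (val r0) = 0%N by rewrite h0; apply: vclx; lia.
have [r1 [h1 E1]] := @Xv_ex (1) ltac:(lia).
have k1 : vcl (val r1) = 0%N by rewrite h1; apply: vclx; lia.
have [r2 [h2 E2]] := @Xv_ex ((m + j).-1) ltac:(lia).
have k2 : vcl (val r2) = 1%N by rewrite h2; apply: vcly; lia.
have [r3 [h3 E3]] := @Xv_ex ((m + b).-1) ltac:(lia).
have k3 : vcl (val r3) = 1%N by rewrite h3; apply: vcly; lia.
have [r4 [h4 E4]] := @Xv_ex (m + n) ltac:(lia).
have k4 : vcl (val r4) = 2%N by rewrite h4; apply: vclz; lia.
have d0_1 : (val r0 == val r1) = false by rewrite h0 h1; apply/eqP; lia.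
have d0_2 : (val r0 == val r2) = false by rewrite h0 h2; apply/eqP; lia.
have d0_3 : (val r0 == val r3) = false by rewrite h0 h3; apply/eqP; lia.
have d0_4 : (val r0 == val r4) = false by rewrite h0 h4; apply/eqP; lia.
have d1_2 : (val r1 == val r2) = false by rewrite h1 h2; apply/eqP; lia.
have d1_4 : (val r1 == val r4) = false by rewrite h1 h4; apply/eqP; lia.
have d2_1 : (val r2 == val r1) = false by rewrite h2 h1; apply/eqP; lia.
have d2_3 : (val r2 == val r3) = false by rewrite h2 h3; apply/eqP; move: (N3 : j != b) => ?; lia.
have d2_4 : (val r2 == val r4) = false by rewrite h2 h4; apply/eqP; lia.
have d3_1 : (val r3 == val r1) = false by rewrite h3 h1; apply/eqP; lia.
have d3_2 : (val r3 == val r2) = false by rewrite h3 h2; apply/eqP; move: (N3 : j != b) => ?; lia.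
have d3_4 : (val r3 == val r4) = false by rewrite h3 h4; apply/eqP; lia.
have d4_2 : (val r4 == val r2) = false by rewrite h4 h2; apply/eqP; lia.
rewrite ?E0 ?E1 ?E2 ?E3 ?E4.
have := @any_minor _ _ L r0 r2 r3 r1 r4 r2.
rewrite -!(inj_eq val_inj).
move=> /(_ (negbT d0_2) (negbT d0_3) (negbT d2_3) (negbT d1_4) (negbT d1_2) (negbT d4_2)).
rewrite /dd !Lval ?eqxx ?d0_1 ?d0_2 ?d0_3 ?d0_4 ?d1_2 ?d1_4 ?d2_1 ?d2_3 ?d2_4 ?d3_1 ?d3_2 ?d3_4 ?d4_2 ?k0 ?k1 ?k2 ?k3 ?k4 /R3 /=.
move=> H; apply: (ig_eq _ (igM (-1) H)); ring.
Qed.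

Lemma c_2  :
  (1 < m)%N -> (1 < n)%N -> (1 < o)%N ->
  ideal_gen I3 (2).
Proof.
move=> H0 H1 H2; rewrite /vx /vy /vz.
have [r0 [h0 E0]] := @Xv_ex (0) ltac:(lia).
have k0 : vcl (val r0) = 0%N by rewrite h0; apply: vclx; lia.
have [r1 [h1 E1]] := @Xv_ex (1) ltac:(lia).
have k1 : vcl (val r1) = 0%N by rewrite h1; apply: vclx; lia.
have [r2 [h2 E2]] := @Xv_ex (m) ltac:(lia).
have k2 : vcl (val r2) = 1%N by rewrite h2; apply: vcly; lia.
have [r3 [h3 E3]] := @Xv_ex (m.+1) ltac:(lia).
have k3 : vcl (val r3) = 1%N by rewrite h3; apply: vcly; lia.
have [r4 [h4 E4]] := @Xv_ex (m + n) ltac:(lia).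
have k4 : vcl (val r4) = 2%N by rewrite h4; apply: vclz; lia.
have [r5 [h5 E5]] := @Xv_ex ((m + n).+1) ltac:(lia).
have k5 : vcl (val r5) = 2%N by rewrite h5; apply: vclz; lia.
have d0_1 : (val r0 == val r1) = false by rewrite h0 h1; apply/eqP; lia.
have d0_2 : (val r0 == val r2) = false by rewrite h0 h2; apply/eqP; lia.
have d0_3 : (val r0 == val r3) = false by rewrite h0 h3; apply/eqP; lia.
have d0_4 : (val r0 == val r4) = false by rewrite h0 h4; apply/eqP; lia.
have d0_5 : (val r0 == val r5) = false by rewrite h0 h5; apply/eqP; lia.
have d1_3 : (val r1 == val r3) = false by rewrite h1 h3; apply/eqP; lia.
have d1_5 : (val r1 == val r5) = false by rewrite h1 h5; apply/eqP; lia.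
have d2_1 : (val r2 == val r1) = false by rewrite h2 h1; apply/eqP; lia.
have d2_3 : (val r2 == val r3) = false by rewrite h2 h3; apply/eqP; lia.
have d2_4 : (val r2 == val r4) = false by rewrite h2 h4; apply/eqP; lia.
have d2_5 : (val r2 == val r5) = false by rewrite h2 h5; apply/eqP; lia.
have d3_5 : (val r3 == val r5) = false by rewrite h3 h5; apply/eqP; lia.
have d4_1 : (val r4 == val r1) = false by rewrite h4 h1; apply/eqP; lia.
have d4_3 : (val r4 == val r3) = false by rewrite h4 h3; apply/eqP; lia.
have d4_5 : (val r4 == val r5) = false by rewrite h4 h5; apply/eqP; lia.
rewrite ?E0 ?E1 ?E2 ?E3 ?E4 ?E5.
have := @any_minor _ _ L r0 r2 r4 r1 r3 r5.
rewrite -!(inj_eq val_inj).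
move=> /(_ (negbT d0_2) (negbT d0_4) (negbT d2_4) (negbT d1_3) (negbT d1_5) (negbT d3_5)).
rewrite /dd !Lval ?eqxx ?d0_1 ?d0_2 ?d0_3 ?d0_4 ?d0_5 ?d1_3 ?d1_5 ?d2_1 ?d2_3 ?d2_4 ?d2_5 ?d3_5 ?d4_1 ?d4_3 ?d4_5 ?k0 ?k1 ?k2 ?k3 ?k4 ?k5 /R3 /=.
move=> H; apply: (ig_eq _ (igM (1) H)); ring.
Qed.

Lemma c_z (k c : nat) :
  (1 < m)%N -> (0 < n)%N -> (0 < k <= o)%N -> (0 < c <= o)%N -> k != c ->
  ideal_gen I3 (vz m n o k + 1).
Proof.
move=> H0 H1 H2 H3 H4; rewrite /vx /vy /vz.
have N4 : hide (k != c) := H4; clear H4.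
have [r0 [h0 E0]] := @Xv_ex (0) ltac:(lia).
have k0 : vcl (val r0) = 0%N by rewrite h0; apply: vclx; lia.
have [r1 [h1 E1]] := @Xv_ex (1) ltac:(lia).
have k1 : vcl (val r1) = 0%N by rewrite h1; apply: vclx; lia.
have [r2 [h2 E2]] := @Xv_ex (m) ltac:(lia).
have k2 : vcl (val r2) = 1%N by rewrite h2; apply: vcly; lia.
have [r3 [h3 E3]] := @Xv_ex ((m + n + k).-1) ltac:(lia).
have k3 : vcl (val r3) = 2%N by rewrite h3; apply: vclz; lia.
have [r4 [h4 E4]] := @Xv_ex ((m + n + c).-1) ltac:(lia).
have k4 : vcl (val r4) = 2%N by rewrite h4; apply: vclz; lia.
have d0_1 : (val r0 == val r1) = false by rewrite h0 h1; apply/eqP; lia.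
have d0_2 : (val r0 == val r2) = false by rewrite h0 h2; apply/eqP; lia.
have d0_3 : (val r0 == val r3) = false by rewrite h0 h3; apply/eqP; lia.
have d0_4 : (val r0 == val r4) = false by rewrite h0 h4; apply/eqP; lia.
have d1_3 : (val r1 == val r3) = false by rewrite h1 h3; apply/eqP; lia.
have d1_4 : (val r1 == val r4) = false by rewrite h1 h4; apply/eqP; lia.
have d2_1 : (val r2 == val r1) = false by rewrite h2 h1; apply/eqP; lia.
have d2_3 : (val r2 == val r3) = false by rewrite h2 h3; apply/eqP; lia.
have d2_4 : (val r2 == val r4) = false by rewrite h2 h4; apply/eqP; lia.
have d3_1 : (val r3 == val r1) = false by rewrite h3 h1; apply/eqP; lia.
have d3_4 : (val r3 == val r4) = false by rewrite h3 h4; apply/eqP; move: (N4 : k != c) => ?; lia.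
rewrite ?E0 ?E1 ?E2 ?E3 ?E4.
have := @any_minor _ _ L r0 r2 r3 r1 r3 r4.
rewrite -!(inj_eq val_inj).
move=> /(_ (negbT d0_2) (negbT d0_3) (negbT d2_3) (negbT d1_3) (negbT d1_4) (negbT d3_4)).
rewrite /dd !Lval ?eqxx ?d0_1 ?d0_2 ?d0_3 ?d0_4 ?d1_3 ?d1_4 ?d2_1 ?d2_3 ?d2_4 ?d3_1 ?d3_4 ?k0 ?k1 ?k2 ?k3 ?k4 /R3 /=.
move=> H; apply: (ig_eq _ (igM (-1) H)); ring.
Qed.

Lemma c_y1p2  :
  (1 < m)%N -> (0 < n)%N -> (1 < o)%N ->
  ideal_gen I3 (vy m n o 1 + 2).
Proof.
move=> H0 H1 H2; rewrite /vx /vy /vz.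
have [r0 [h0 E0]] := @Xv_ex (0) ltac:(lia).
have k0 : vcl (val r0) = 0%N by rewrite h0; apply: vclx; lia.
have [r1 [h1 E1]] := @Xv_ex (1) ltac:(lia).
have k1 : vcl (val r1) = 0%N by rewrite h1; apply: vclx; lia.
have [r2 [h2 E2]] := @Xv_ex ((m + 1).-1) ltac:(lia).
have k2 : vcl (val r2) = 1%N by rewrite h2; apply: vcly; lia.
have [r3 [h3 E3]] := @Xv_ex (m + n) ltac:(lia).
have k3 : vcl (val r3) = 2%N by rewrite h3; apply: vclz; lia.
have [r4 [h4 E4]] := @Xv_ex ((m + n).+1) ltac:(lia).
have k4 : vcl (val r4) = 2%N by rewrite h4; apply: vclz; lia.
have d0_1 : (val r0 == val r1) = false by rewrite h0 h1; apply/eqP; lia.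
have d0_2 : (val r0 == val r2) = false by rewrite h0 h2; apply/eqP; lia.
have d0_3 : (val r0 == val r3) = false by rewrite h0 h3; apply/eqP; lia.
have d0_4 : (val r0 == val r4) = false by rewrite h0 h4; apply/eqP; lia.
have d1_2 : (val r1 == val r2) = false by rewrite h1 h2; apply/eqP; lia.
have d1_4 : (val r1 == val r4) = false by rewrite h1 h4; apply/eqP; lia.
have d2_1 : (val r2 == val r1) = false by rewrite h2 h1; apply/eqP; lia.
have d2_3 : (val r2 == val r3) = false by rewrite h2 h3; apply/eqP; lia.
have d2_4 : (val r2 == val r4) = false by rewrite h2 h4; apply/eqP; lia.
have d3_1 : (val r3 == val r1) = false by rewrite h3 h1; apply/eqP; lia.
have d3_2 : (val r3 == val r2) = false by rewrite h3 h2; apply/eqP; lia.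
have d3_4 : (val r3 == val r4) = false by rewrite h3 h4; apply/eqP; lia.
rewrite ?E0 ?E1 ?E2 ?E3 ?E4.
have := @any_minor _ _ L r0 r2 r3 r1 r2 r4.
rewrite -!(inj_eq val_inj).
move=> /(_ (negbT d0_2) (negbT d0_3) (negbT d2_3) (negbT d1_2) (negbT d1_4) (negbT d2_4)).
rewrite /dd !Lval ?eqxx ?d0_1 ?d0_2 ?d0_3 ?d0_4 ?d1_2 ?d1_4 ?d2_1 ?d2_3 ?d2_4 ?d3_1 ?d3_2 ?d3_4 ?k0 ?k1 ?k2 ?k3 ?k4 /R3 /=.
move=> H; apply: (ig_eq _ (igM (1) H)); ring.
Qed.

Lemma c_z1m1  :
  (1 < m)%N -> (1 < n)%N -> (0 < o)%N ->
  ideal_gen I3 (vz m n o 1 - 1).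
Proof.
move=> H0 H1 H2; rewrite /vx /vy /vz.
have [r0 [h0 E0]] := @Xv_ex (0) ltac:(lia).
have k0 : vcl (val r0) = 0%N by rewrite h0; apply: vclx; lia.
have [r1 [h1 E1]] := @Xv_ex (1) ltac:(lia).
have k1 : vcl (val r1) = 0%N by rewrite h1; apply: vclx; lia.
have [r2 [h2 E2]] := @Xv_ex ((m + 1).-1) ltac:(lia).
have k2 : vcl (val r2) = 1%N by rewrite h2; apply: vcly; lia.
have [r3 [h3 E3]] := @Xv_ex (m.+1) ltac:(lia).
have k3 : vcl (val r3) = 1%N by rewrite h3; apply: vcly; lia.
have [r4 [h4 E4]] := @Xv_ex ((m + n + 1).-1) ltac:(lia).
have k4 : vcl (val r4) = 2%N by rewrite h4; apply: vclz; lia.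
have d0_1 : (val r0 == val r1) = false by rewrite h0 h1; apply/eqP; lia.
have d0_2 : (val r0 == val r2) = false by rewrite h0 h2; apply/eqP; lia.
have d0_3 : (val r0 == val r3) = false by rewrite h0 h3; apply/eqP; lia.
have d0_4 : (val r0 == val r4) = false by rewrite h0 h4; apply/eqP; lia.
have d1_3 : (val r1 == val r3) = false by rewrite h1 h3; apply/eqP; lia.
have d1_4 : (val r1 == val r4) = false by rewrite h1 h4; apply/eqP; lia.
have d2_1 : (val r2 == val r1) = false by rewrite h2 h1; apply/eqP; lia.
have d2_3 : (val r2 == val r3) = false by rewrite h2 h3; apply/eqP; lia.
have d2_4 : (val r2 == val r4) = false by rewrite h2 h4; apply/eqP; lia.
have d4_1 : (val r4 == val r1) = false by rewrite h4 h1; apply/eqP; lia.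
have d4_3 : (val r4 == val r3) = false by rewrite h4 h3; apply/eqP; lia.
rewrite ?E0 ?E1 ?E2 ?E3 ?E4.
have := @any_minor _ _ L r0 r2 r4 r1 r4 r3.
rewrite -!(inj_eq val_inj).
move=> /(_ (negbT d0_2) (negbT d0_4) (negbT d2_4) (negbT d1_4) (negbT d1_3) (negbT d4_3)).
rewrite /dd !Lval ?eqxx ?d0_1 ?d0_2 ?d0_3 ?d0_4 ?d1_3 ?d1_4 ?d2_1 ?d2_3 ?d2_4 ?d4_1 ?d4_3 ?k0 ?k1 ?k2 ?k3 ?k4 /R3 /=.
move=> H; apply: (ig_eq _ (igM (1) H)); ring.
Qed.

Lemma c_6  :
  (1 < m)%N -> (0 < n)%N -> (0 < o)%N ->
  ideal_gen I3 (vz m n o 1 * vy m n o 1 + vz m n o 1 - 1).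
Proof.
move=> H0 H1 H2; rewrite /vx /vy /vz.
have [r0 [h0 E0]] := @Xv_ex (0) ltac:(lia).
have k0 : vcl (val r0) = 0%N by rewrite h0; apply: vclx; lia.
have [r1 [h1 E1]] := @Xv_ex (1) ltac:(lia).
have k1 : vcl (val r1) = 0%N by rewrite h1; apply: vclx; lia.
have [r2 [h2 E2]] := @Xv_ex ((m + 1).-1) ltac:(lia).
have k2 : vcl (val r2) = 1%N by rewrite h2; apply: vcly; lia.
have [r3 [h3 E3]] := @Xv_ex ((m + n + 1).-1) ltac:(lia).
have k3 : vcl (val r3) = 2%N by rewrite h3; apply: vclz; lia.
have d0_1 : (val r0 == val r1) = false by rewrite h0 h1; apply/eqP; lia.
have d0_2 : (val r0 == val r2) = false by rewrite h0 h2; apply/eqP; lia.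
have d0_3 : (val r0 == val r3) = false by rewrite h0 h3; apply/eqP; lia.
have d1_2 : (val r1 == val r2) = false by rewrite h1 h2; apply/eqP; lia.
have d1_3 : (val r1 == val r3) = false by rewrite h1 h3; apply/eqP; lia.
have d2_1 : (val r2 == val r1) = false by rewrite h2 h1; apply/eqP; lia.
have d2_3 : (val r2 == val r3) = false by rewrite h2 h3; apply/eqP; lia.
have d3_1 : (val r3 == val r1) = false by rewrite h3 h1; apply/eqP; lia.
have d3_2 : (val r3 == val r2) = false by rewrite h3 h2; apply/eqP; lia.
rewrite ?E0 ?E1 ?E2 ?E3.
have := @any_minor _ _ L r0 r2 r3 r1 r2 r3.
rewrite -!(inj_eq val_inj).
move=> /(_ (negbT d0_2) (negbT d0_3) (negbT d2_3) (negbT d1_2) (negbT d1_3) (negbT d2_3)).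
rewrite /dd !Lval ?eqxx ?d0_1 ?d0_2 ?d0_3 ?d1_2 ?d1_3 ?d2_1 ?d2_3 ?d3_1 ?d3_2 ?k0 ?k1 ?k2 ?k3 /R3 /=.
move=> H; apply: (ig_eq _ (igM (-1) H)); ring.
Qed.

Lemma c_9 (i : nat) :
  (0 < i <= m)%N -> (1 < n)%N ->
  ideal_gen I3 (vx m n o i * vy m n o 1 * vy m n o 2 - vy m n o 1 - vy m n o 2).
Proof.
move=> H0 H1; rewrite /vx /vy /vz.
have [r0 [h0 E0]] := @Xv_ex (i.-1) ltac:(lia).
have k0 : vcl (val r0) = 0%N by rewrite h0; apply: vclx; lia.
have [r1 [h1 E1]] := @Xv_ex ((m + 1).-1) ltac:(lia).
have k1 : vcl (val r1) = 1%N by rewrite h1; apply: vcly; lia.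
have [r2 [h2 E2]] := @Xv_ex ((m + 2).-1) ltac:(lia).
have k2 : vcl (val r2) = 1%N by rewrite h2; apply: vcly; lia.
have d0_1 : (val r0 == val r1) = false by rewrite h0 h1; apply/eqP; lia.
have d0_2 : (val r0 == val r2) = false by rewrite h0 h2; apply/eqP; lia.
have d1_0 : (val r1 == val r0) = false by rewrite h1 h0; apply/eqP; lia.
have d1_2 : (val r1 == val r2) = false by rewrite h1 h2; apply/eqP; lia.
have d2_0 : (val r2 == val r0) = false by rewrite h2 h0; apply/eqP; lia.
have d2_1 : (val r2 == val r1) = false by rewrite h2 h1; apply/eqP; lia.
rewrite ?E0 ?E1 ?E2.
have := @any_minor _ _ L r0 r1 r2 r0 r1 r2.
rewrite -!(inj_eq val_inj).
move=> /(_ (negbT d0_1) (negbT d0_2) (negbT d1_2) (negbT d0_1) (negbT d0_2) (negbT d1_2)).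
rewrite /dd !Lval ?eqxx ?d0_1 ?d0_2 ?d1_0 ?d1_2 ?d2_0 ?d2_1 ?k0 ?k1 ?k2 /R3 /=.
move=> H; apply: (ig_eq _ (igM (1) H)); ring.
Qed.

Lemma c_10a  :
  (1 < m)%N -> (1 < n)%N ->
  ideal_gen I3 (vx m n o 2 * vy m n o 1 + vy m n o 1).
Proof.
move=> H0 H1; rewrite /vx /vy /vz.
have [r0 [h0 E0]] := @Xv_ex ((1).-1) ltac:(lia).
have k0 : vcl (val r0) = 0%N by rewrite h0; apply: vclx; lia.
have [r1 [h1 E1]] := @Xv_ex ((2).-1) ltac:(lia).
have k1 : vcl (val r1) = 0%N by rewrite h1; apply: vclx; lia.
have [r2 [h2 E2]] := @Xv_ex ((m + 1).-1) ltac:(lia).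
have k2 : vcl (val r2) = 1%N by rewrite h2; apply: vcly; lia.
have [r3 [h3 E3]] := @Xv_ex ((m + 2).-1) ltac:(lia).
have k3 : vcl (val r3) = 1%N by rewrite h3; apply: vcly; lia.
have d0_1 : (val r0 == val r1) = false by rewrite h0 h1; apply/eqP; lia.
have d0_2 : (val r0 == val r2) = false by rewrite h0 h2; apply/eqP; lia.
have d0_3 : (val r0 == val r3) = false by rewrite h0 h3; apply/eqP; lia.
have d1_2 : (val r1 == val r2) = false by rewrite h1 h2; apply/eqP; lia.
have d1_3 : (val r1 == val r3) = false by rewrite h1 h3; apply/eqP; lia.
have d2_1 : (val r2 == val r1) = false by rewrite h2 h1; apply/eqP; lia.
have d2_3 : (val r2 == val r3) = false by rewrite h2 h3; apply/eqP; lia.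
rewrite ?E0 ?E1 ?E2 ?E3.
have := @any_minor _ _ L r0 r1 r2 r1 r2 r3.
rewrite -!(inj_eq val_inj).
move=> /(_ (negbT d0_1) (negbT d0_2) (negbT d1_2) (negbT d1_2) (negbT d1_3) (negbT d2_3)).
rewrite /dd !Lval ?eqxx ?d0_1 ?d0_2 ?d0_3 ?d1_2 ?d1_3 ?d2_1 ?d2_3 ?k0 ?k1 ?k2 ?k3 /R3 /=.
move=> H; apply: (ig_eq _ (igM (-1) H)); ring.
Qed.

Lemma c_10b  :
  (1 < m)%N -> (1 < n)%N ->
  ideal_gen I3 (vx m n o 2 * vy m n o 2 + vy m n o 2).
Proof.
move=> H0 H1; rewrite /vx /vy /vz.
have [r0 [h0 E0]] := @Xv_ex ((1).-1) ltac:(lia).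
have k0 : vcl (val r0) = 0%N by rewrite h0; apply: vclx; lia.
have [r1 [h1 E1]] := @Xv_ex ((2).-1) ltac:(lia).
have k1 : vcl (val r1) = 0%N by rewrite h1; apply: vclx; lia.
have [r2 [h2 E2]] := @Xv_ex ((m + 1).-1) ltac:(lia).
have k2 : vcl (val r2) = 1%N by rewrite h2; apply: vcly; lia.
have [r3 [h3 E3]] := @Xv_ex ((m + 2).-1) ltac:(lia).
have k3 : vcl (val r3) = 1%N by rewrite h3; apply: vcly; lia.
have d0_1 : (val r0 == val r1) = false by rewrite h0 h1; apply/eqP; lia.
have d0_2 : (val r0 == val r2) = false by rewrite h0 h2; apply/eqP; lia.
have d0_3 : (val r0 == val r3) = false by rewrite h0 h3; apply/eqP; lia.
have d1_2 : (val r1 == val r2) = false by rewrite h1 h2; apply/eqP; lia.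
have d1_3 : (val r1 == val r3) = false by rewrite h1 h3; apply/eqP; lia.
have d2_3 : (val r2 == val r3) = false by rewrite h2 h3; apply/eqP; lia.
have d3_1 : (val r3 == val r1) = false by rewrite h3 h1; apply/eqP; lia.
have d3_2 : (val r3 == val r2) = false by rewrite h3 h2; apply/eqP; lia.
rewrite ?E0 ?E1 ?E2 ?E3.
have := @any_minor _ _ L r0 r1 r3 r1 r2 r3.
rewrite -!(inj_eq val_inj).
move=> /(_ (negbT d0_1) (negbT d0_3) (negbT d1_3) (negbT d1_2) (negbT d1_3) (negbT d2_3)).
rewrite /dd !Lval ?eqxx ?d0_1 ?d0_2 ?d0_3 ?d1_2 ?d1_3 ?d2_3 ?d3_1 ?d3_2 ?k0 ?k1 ?k2 ?k3 /R3 /=.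
move=> H; apply: (ig_eq _ (igM (1) H)); ring.
Qed.

End Graph.



Lemma pick2 i r : (0 < i <= r)%N -> (1 < r)%N -> exists2 a, (0 < a <= r)%N & i != a.
Proof.
move=> hi hr; case: (eqVneq i 1) => [->|h]; first by exists 2%N => //; lia.
by exists 1%N => //; lia.
Qed.

Lemma pick3 i r : (0 < i <= r)%N -> (2 < r)%N ->
  exists a, exists b, [/\ (0 < a <= r)%N, (0 < b <= r)%N, i != a, i != b & a != b].
Proof.
move=> hi hr; case: (eqVneq i 1) => [->|h1].
  by exists 2%N, 3%N; split => //; lia.
case: (eqVneq i 2) => [->|h2].
  by exists 1%N, 3%N; split => //; lia.
by exists 1%N, 2%N; split => //; lia.
Qed.

Section Cases.
Variables m n o : nat.
Local Notation N := (m + n + o)%N.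
Local Notation L := (gen_laplacian (joinG m n o)).
Local Notation PR := {mpoly int[N]}.
Let I3 := crit3_gens (joinG m n o).

Lemma detMstd (d : nat -> PR) : \det (Mstd d) = d 0%N * d 1%N * d 2%N - d 0%N - d 2%N.
Proof. rewrite det3 !mxE /= /R3 /=; ring. Qed.

Lemma cng_eq (S : PR -> Prop) a b : a = b -> cng S a b.
Proof. by move=> ->; apply: cng_refl. Qed.

Lemma case1 : (2 <= m)%N -> (2 <= n)%N -> (2 <= o)%N ->
  same_ideal I3 (fun p => [\/ p = 2,
        exists2 i, (0 < i <= m)%N & p = vx m n o i + 1,
        exists2 j, (0 < j <= n)%N & p = vy m n o j
      | exists2 k, (0 < k <= o)%N & p = vz m n o k + 1]).
Proof.
move=> hm hn ho; set S := (fun p => _).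
have SX : forall i, (0 < i <= m)%N -> ideal_gen S (vx m n o i + 1).
  by move=> i hi; apply: igS; constructor 2; exists i.
have SY : forall j, (0 < j <= n)%N -> ideal_gen S (vy m n o j).
  by move=> j hj; apply: igS; constructor 3; exists j.
have SZ : forall k, (0 < k <= o)%N -> ideal_gen S (vz m n o k + 1).
  by move=> k hk; apply: igS; constructor 4; exists k.
have S2 : ideal_gen S 2 by apply: igS; constructor 1.
apply: same_idealP.
- apply: (@std_in m n o S (fun k => nth 0 [:: -1; 0; -1] k)).
  + move=> u; case: (vcl_cases m n (val u)) => e; rewrite e /=.
    * by apply: cngX SX _; apply: vcl0 e.
    * by apply: cngY SY _; apply: vcl1 e.
    * by apply: cngZ SZ _; apply: vcl2 e.
  + move=> u v _ _; case: (vcl_cases m n (val u)) => e; rewrite e /=; apply: cng_eq => //=.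
    by rewrite oppr0.
  + by rewrite detMstd /=; apply: (ig_eq _ S2); ring.
- move=> p [->|[i hi ->]|[j hj ->]|[k hk ->]].
  + by apply: c_2.
  + by have [a ha ia] := pick2 hi hm; apply: (c_x1 hi ha ia); lia.
  + by have [b hb jb] := pick2 hj hn; apply: (c_y2 hm hj hb jb); lia.
  + by have [c hc kc] := pick2 hk ho; apply: (c_z hm _ hk hc kc); lia.
Qed.

Lemma case2 : (2 <= m)%N -> n = 1%N -> (2 <= o)%N ->
  same_ideal I3 (fun p => [\/
        exists2 i, (0 < i <= m)%N & p = vx m n o i + 1,
        p = vy m n o 1%N + 2
      | exists2 k, (0 < k <= o)%N & p = vz m n o k + 1]).
Proof.
move=> hm hn ho; set S := (fun p => _).
have SX : forall i, (0 < i <= m)%N -> ideal_gen S (vx m n o i + 1).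
  by move=> i hi; apply: igS; constructor 1; exists i.
have SZ : forall k, (0 < k <= o)%N -> ideal_gen S (vz m n o k + 1).
  by move=> k hk; apply: igS; constructor 3; exists k.
have SY : ideal_gen S (vy m n o 1%N + 2) by apply: igS; constructor 2.
apply: same_idealP.
- apply: (@std_in m n o S (fun k => nth 0 [:: -1; -2; -1] k)).
  + move=> u; case: (vcl_cases m n (val u)) => e; rewrite e /=.
    * by apply: cngX SX _; apply: vcl0 e.
    * have := vcl1 e => hu; rewrite /cng (Xy hu) (_ : (val u - m).+1 = 1%N); last lia.
      by rewrite opprK.
    * by apply: cngZ SZ _; apply: vcl2 e.
  + move=> u v huv e'; case: (vcl_cases m n (val u)) => e; rewrite e /=; try (apply: cng_eq => //=; fail).
    have := vcl1 e; rewrite e' in e; have := vcl1 e; lia.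
  + by rewrite detMstd /=; apply: (ig_eq _ (ig0 S)); ring.
- move=> p [[i hi ->]| -> |[k hk ->]].
  + by have [a ha ia] := pick2 hi hm; apply: (c_x1 hi ha ia); lia.
  + by apply: c_y1p2; lia.
  + by have [c hc kc] := pick2 hk ho; apply: (c_z hm _ hk hc kc); lia.
Qed.

Lemma case3 : (2 <= m)%N -> (2 <= n)%N -> o = 1%N ->
  same_ideal I3 (fun p => [\/
        exists2 i, (0 < i <= m)%N & p = vx m n o i + 1,
        exists2 j, (0 < j <= n)%N & p = vy m n o j
      | p = vz m n o 1%N - 1]).
Proof.
move=> hm hn ho; set S := (fun p => _).
have SX : forall i, (0 < i <= m)%N -> ideal_gen S (vx m n o i + 1).
  by move=> i hi; apply: igS; constructor 1; exists i.
have SY : forall j, (0 < j <= n)%N -> ideal_gen S (vy m n o j).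
  by move=> j hj; apply: igS; constructor 2; exists j.
have SZ : ideal_gen S (vz m n o 1%N - 1) by apply: igS; constructor 3.
apply: same_idealP.
- apply: (@std_in m n o S (fun k => nth 0 [:: -1; 0; 1] k)).
  + move=> u; case: (vcl_cases m n (val u)) => e; rewrite e /=.
    * by apply: cngX SX _; apply: vcl0 e.
    * by apply: cngY SY _; apply: vcl1 e.
    * have := vcl2 e => hu; have hu' : (val u < m + n + o)%N := ltn_ord u.
      by rewrite /cng (Xz hu) (_ : (val u - m - n).+1 = 1%N); last lia.
  + move=> u v huv e'; case: (vcl_cases m n (val u)) => e; rewrite e /=; try (apply: cng_eq => //=; fail).
      by apply: cng_eq; rewrite /= oppr0.
    have hu' : (val u < m + n + o)%N := ltn_ord u.
    have hv' : (val v < m + n + o)%N := ltn_ord v.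
    have := vcl2 e; rewrite e' in e; have := vcl2 e; lia.
  + by rewrite detMstd /=; apply: (ig_eq _ (ig0 S)); ring.
- move=> p [[i hi ->]|[j hj ->]| ->].
  + by have [a ha ia] := pick2 hi hm; apply: (c_x1 hi ha ia); lia.
  + by have [b hb jb] := pick2 hj hn; apply: (c_y2 hm hj hb jb); lia.
  + by apply: c_z1m1; lia.
Qed.

Lemma case6 : (2 <= m)%N -> n = 1%N -> o = 1%N ->
  same_ideal I3 (fun p =>
        (exists2 i, (0 < i <= m)%N & p = vx m n o i + 1) \/
        p = vz m n o 1%N * vy m n o 1%N + vz m n o 1%N - 1).
Proof.
move=> hm hn ho; set S := (fun p => _).
have SX : forall i, (0 < i <= m)%N -> ideal_gen S (vx m n o i + 1).
  by move=> i hi; apply: igS; left; exists i.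
have SG : ideal_gen S (vz m n o 1%N * vy m n o 1%N + vz m n o 1%N - 1) by apply: igS; right.
apply: same_idealP.
- apply: (@std_in m n o S (fun k => nth 0 [:: -1; vy m n o 1%N; vz m n o 1%N] k)).
  + move=> u; case: (vcl_cases m n (val u)) => e; rewrite e /=.
    * by apply: cngX SX _; apply: vcl0 e.
    * have := vcl1 e => hu; apply: cng_eq; rewrite (Xy hu) (_ : (val u - m).+1 = 1%N) //; lia.
    * have := vcl2 e => hu; have hu' : (val u < m + n + o)%N := ltn_ord u.
      apply: cng_eq; rewrite (Xz hu) (_ : (val u - m - n).+1 = 1%N) //; lia.
  + move=> u v huv e'; case: (vcl_cases m n (val u)) => e; rewrite e /=; try (apply: cng_eq => //=; fail).
      have := vcl1 e; rewrite e' in e; have := vcl1 e; lia.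
    have hu' : (val u < m + n + o)%N := ltn_ord u.
    have hv' : (val v < m + n + o)%N := ltn_ord v.
    have := vcl2 e; rewrite e' in e; have := vcl2 e; lia.
  + by rewrite detMstd /=; apply: (ig_eq _ (igN SG)); ring.
- move=> p [[i hi ->]| ->].
  + by have [a ha ia] := pick2 hi hm; apply: (c_x1 hi ha ia); lia.
  + by apply: c_6; lia.
Qed.

Lemma case7 : (3 <= m)%N -> (3 <= n)%N -> o = 0%N ->
  same_ideal I3 (fun p =>
        (exists2 i, (0 < i <= m)%N & p = vx m n o i + 1) \/
        (exists2 j, (0 < j <= n)%N & p = vy m n o j)).
Proof.
move=> hm hn ho; set S := (fun p => _).
have SX : forall i, (0 < i <= m)%N -> ideal_gen S (vx m n o i + 1).
  by move=> i hi; apply: igS; left; exists i.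
have SY : forall j, (0 < j <= n)%N -> ideal_gen S (vy m n o j).
  by move=> j hj; apply: igS; right; exists j.
apply: same_idealP.
- apply: (@std_in m n o S (fun k => nth 0 [:: -1; 0; 1] k)).
  + move=> u; case: (vcl_cases m n (val u)) => e; rewrite e /=.
    * by apply: cngX SX _; apply: vcl0 e.
    * by apply: cngY SY _; apply: vcl1 e.
    * have := vcl2 e => hu; have hu' : (val u < m + n + o)%N := ltn_ord u; lia.
  + move=> u v huv e'; case: (vcl_cases m n (val u)) => e; rewrite e /=; try (apply: cng_eq => //=; fail).
      by apply: cng_eq; rewrite /= oppr0.
    have := vcl2 e => hu; have hu' : (val u < m + n + o)%N := ltn_ord u; lia.
  + by rewrite detMstd /=; apply: (ig_eq _ (ig0 S)); ring.
- move=> p [[i hi ->]|[j hj ->]].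
  + have [a [b [ha hb ia ib ab]]] := pick3 hi hm.
    by apply: (@c_x2 m n o i a b hi ha hb ia ib ab); lia.
  + have [a [b [ha hb ja jb ab]]] := pick3 hj hn.
    by apply: (@c_y1 m n o j a b _ hj ha hb ja jb ab); lia.
Qed.

Lemma gen_in (S : PR -> Prop) (g : nat -> nat) (mm : nat -> nat -> PR) :
  (forall k, (k < N)%N -> (g k < 3)%N) ->
  (forall u : 'I_N, cng S 'X_u (mm (g (val u)) (g (val u)))) ->
  (forall u v : 'I_N, val u != val v ->
     cng S (- ((R3 (vcl m n (val u)) (vcl m n (val v)) : nat)%:R)) (mm (g (val u)) (g (val v)))) ->
  ideal_gen S (\det (\matrix_(k < 3, l < 3) mm k l)) ->
  forall p, I3 p -> ideal_gen S p.
Proof.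
move=> hg h1 h2 h3.
apply: (@minors_in _ _ L 3 (fun u => inord (g (val u))) (\matrix_(k < 3, l < 3) mm k l)).
  move=> u v; rewrite Lval mxE !inordK ?hg ?ltn_ord //.
  case: eqP => [/val_inj <- | /eqP huv]; first exact: h1.
  by rewrite /=; apply: h2.
move=> f g' _ _.
by apply: (@det_sub3 _ (\matrix_(k < 3, l < 3) mm k l) S (fun i => inord (g (val (f i)))) (fun j => inord (g (val (g' j))))).
Qed.

Definition mtab (r0 r1 r2 : seq PR) (k l : nat) : PR := nth 0 (nth [::] [:: r0; r1; r2] k) l.

Lemma det_mtab (r0 r1 r2 : seq PR) : \det (\matrix_(k < 3, l < 3) mtab r0 r1 r2 k l) =
  let a i j := mtab r0 r1 r2 i j in
  a 0 0 * (a 1 1 * a 2 2 - a 1 2 * a 2 1)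
  - a 0 1 * (a 1 0 * a 2 2 - a 1 2 * a 2 0)
  + a 0 2 * (a 1 0 * a 2 1 - a 1 1 * a 2 0).
Proof. by rewrite det3 !mxE. Qed.

Definition g9 (k : nat) : nat := if (k < m)%N then 0%N else (k - m).+1.

Lemma case9 : (3 <= m)%N -> n = 2%N -> o = 0%N ->
  same_ideal I3 (fun p =>
        (exists2 i, (0 < i <= m)%N & p = vx m n o i + 1) \/
        p = vy m n o 1%N * vy m n o 2%N + vy m n o 1%N + vy m n o 2%N).
Proof.
move=> hm hn ho; set S := (fun p => _).
have SX : forall i, (0 < i <= m)%N -> ideal_gen S (vx m n o i + 1).
  by move=> i hi; apply: igS; left; exists i.
have SG : ideal_gen S (vy m n o 1%N * vy m n o 2%N + vy m n o 1%N + vy m n o 2%N) by apply: igS; right.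
apply: same_idealP.
- apply: (@gen_in S g9 (mtab [:: -1; -1; -1] [:: -1; vy m n o 1%N; 0] [:: -1; 0; vy m n o 2%N])).
  + by move=> k hk; rewrite /g9; case: ifP => _; lia.
  + move=> u; have hu' : (val u < m + n + o)%N := ltn_ord u.
    have [hu|[hu|hu]] : (val u < m)%N \/ val u = m \/ val u = m.+1 by lia.
    * by rewrite /g9 hu /=; apply: cngX SX _.
    * apply: cng_eq; rewrite (@Xy m n o u) ?hu /g9 ?ltnn ?subnn //; lia.
    * apply: cng_eq; rewrite (@Xy m n o u) ?hu /g9 ?subSnn //=; last lia.
      by rewrite ltnNge leqnSn.
  + move=> u v huv; have hu' : (val u < m + n + o)%N := ltn_ord u.
    have hv' : (val v < m + n + o)%N := ltn_ord v.
    have Du : (val u < m)%N \/ val u = m \/ val u = m.+1 by lia.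
    have Dv : (val v < m)%N \/ val v = m \/ val v = m.+1 by lia.
    case: Du => [hu|[hu|hu]]; case: Dv => [hv|[hv|hv]];
    try (exfalso; move: huv; rewrite hu hv; rewrite eqxx; done);
    rewrite /g9 /vcl ?hu ?hv; dec; rewrite ?subnn ?subSnn /=; apply: cng_eq; rewrite /mtab /=; ring.
  + rewrite det3 !mxE /mtab /=; apply: (ig_eq _ (igN SG)); ring.
- move=> p [[i hi ->]| ->].
  + have [a [b [ha hb ia ib ab]]] := pick3 hi hm.
    by apply: (@c_x2 m n o i a b hi ha hb ia ib ab); lia.
  + have h1 : ideal_gen I3 (vx m n o 1%N + 1).
      have hi : (0 < 1 <= m)%N by lia.
      have [a [b [ha hb ia ib ab]]] := pick3 hi hm.
      by apply: (@c_x2 m n o 1 a b hi ha hb ia ib ab); lia.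
    have h2 : ideal_gen I3 (vx m n o 1%N * vy m n o 1%N * vy m n o 2%N - vy m n o 1%N - vy m n o 2%N).
      by apply: c_9; lia.
    apply: (ig_eq _ (igB (igMr (vy m n o 1%N * vy m n o 2%N) h1) h2)); ring.
Qed.

Definition g8 (k : nat) : nat := if k == 0%N then 0%N else if k == 1%N then 1%N else 2%N.

Lemma case8 : m = 2%N -> (3 <= n)%N -> o = 0%N ->
  same_ideal I3 (fun p => p = vx m n o 1%N + vx m n o 2%N + 2 \/
        exists2 j, (0 < j <= n)%N & p = vy m n o j).
Proof.
move=> hm hn ho; set S := (fun p => _).
have SG : ideal_gen S (vx m n o 1%N + vx m n o 2%N + 2) by apply: igS; left.
have SY : forall j, (0 < j <= n)%N -> ideal_gen S (vy m n o j).
  by move=> j hj; apply: igS; right; exists j.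
apply: same_idealP.
- apply: (@gen_in S g8 (mtab [:: vx m n o 1%N; -1; -1] [:: -1; -2 - vx m n o 1%N; -1] [:: -1; -1; 0])).
  + by move=> k hk; rewrite /g8; case: ifP => _ //; case: ifP.
  + move=> u; have hu' : (val u < m + n + o)%N := ltn_ord u.
    have [hu|[hu|hu]] : val u = 0%N \/ val u = 1%N \/ (2 <= val u)%N by lia.
    * apply: cng_eq; rewrite (@Xx m n o u) ?hu /g8 /mtab //=; lia.
    * rewrite (@Xx m n o u) ?hu /g8 /mtab /=; last lia.
      by rewrite /cng; apply: (ig_eq _ SG); ring.
    * have h0 : (val u == 0%N) = false by apply/negbTE/eqP; lia.
      have h1 : (val u == 1%N) = false by apply/negbTE/eqP; lia.
      rewrite /g8 h0 h1 /mtab /=.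
      by apply: cngY SY _; lia.
  + move=> u v huv; have hu' : (val u < m + n + o)%N := ltn_ord u.
    have hv' : (val v < m + n + o)%N := ltn_ord v.
    have Du : val u = 0%N \/ val u = 1%N \/ (2 <= val u)%N by lia.
    have Dv : val v = 0%N \/ val v = 1%N \/ (2 <= val v)%N by lia.
    case: Du => [hu|[hu|hu]]; case: Dv => [hv|[hv|hv]];
    try (exfalso; move: huv; rewrite hu hv; rewrite eqxx; done);
    rewrite /g8 /vcl ?hu ?hv; dec; rewrite /mtab /=; apply: cng_eq; rewrite /=; ring.
  + by rewrite det3 !mxE /mtab /=; apply: (ig_eq _ (ig0 S)); ring.
- move=> p [->|[j hj ->]].
  + by apply: c_xx; lia.
  + have [a [b [ha hb ja jb ab]]] := pick3 hj hn.
    by apply: (@c_y1 m n o j a b _ hj ha hb ja jb ab); lia.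
Qed.
End Cases.

Section Case10.
Local Notation N := (2 + 2 + 0)%N.
Local Notation PR := {mpoly int[N]}.
Local Notation X2 := (vx 2 2 0 2).
Local Notation Y1 := (vy 2 2 0 1).
Local Notation Y2 := (vy 2 2 0 2).

Definition mm10 (k l : nat) : PR :=
  if k == l then nth 0 [:: -2 - X2; X2; Y1; Y2] k
  else - ((R3 (vcl 2 2 k) (vcl 2 2 l) : nat)%:R).

Lemma case10' : same_ideal (crit3_gens (joinG 2 2 0)) (fun p => [\/ p = vx 2 2 0 1 + X2 + 2,
        p = X2 * Y1 + Y1, p = X2 * Y2 + Y2 | p = Y1 * Y2 + Y1 + Y2]).
Proof.
set S := (fun p => _).
have G0 : ideal_gen S (vx 2 2 0 1 + X2 + 2) by apply: igS; constructor 1.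
have G1 : ideal_gen S (X2 * Y1 + Y1) by apply: igS; constructor 2.
have G2 : ideal_gen S (X2 * Y2 + Y2) by apply: igS; constructor 3.
have G3 : ideal_gen S (Y1 * Y2 + Y1 + Y2) by apply: igS; constructor 4.
apply: same_idealP.
- apply: (@minors_in _ _ _ N (fun u => u) (\matrix_(k, l) mm10 k l)).
    move=> u v; rewrite Lval mxE /mm10.
    case: eqP => [_ | /eqP huv]; last by apply: cng_refl.
    have hu' : (val u < 4)%N := ltn_ord u.
    have [hu|[hu|[hu|hu]]] : val u = 0%N \/ val u = 1%N \/ val u = 2%N \/ val u = 3%N by lia.
    + rewrite (@Xx 2 2 0 u) ?hu //= /cng; apply: (ig_eq _ G0); ring.
    + by apply: cng_eq; rewrite (@Xx 2 2 0 u) ?hu.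
    + by apply: cng_eq; rewrite (@Xy 2 2 0 u) ?hu.
    + by apply: cng_eq; rewrite (@Xy 2 2 0 u) ?hu.
  move=> f g hf hg.
  have F01 := hf 0 1 isT; have F12 := hf 1 2 isT; have F2 := ltn_ord (f 2).
  have G01 := hg 0 1 isT; have G12 := hg 1 2 isT; have G2' := ltn_ord (g 2).
  have Df : [\/ [/\ (f 0 : nat) = 0%N, (f 1 : nat) = 1%N & (f 2 : nat) = 2%N],
                [/\ (f 0 : nat) = 0%N, (f 1 : nat) = 1%N & (f 2 : nat) = 3%N],
                [/\ (f 0 : nat) = 0%N, (f 1 : nat) = 2%N & (f 2 : nat) = 3%N] |
                [/\ (f 0 : nat) = 1%N, (f 1 : nat) = 2%N & (f 2 : nat) = 3%N]].
    have : ((f 0 : nat) = 0%N \/ (f 0 : nat) = 1%N) by lia.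
    case=> h0; [ have : ((f 1 : nat) = 1%N \/ (f 1 : nat) = 2%N) by lia | ]; last first.
      by constructor 4; split => //; lia.
    case=> h1; [ have : ((f 2 : nat) = 2%N \/ (f 2 : nat) = 3%N) by lia | ]; last first.
      by constructor 3; split => //; lia.
    by case=> h2; [constructor 1 | constructor 2].
  have Dg : [\/ [/\ (g 0 : nat) = 0%N, (g 1 : nat) = 1%N & (g 2 : nat) = 2%N],
                [/\ (g 0 : nat) = 0%N, (g 1 : nat) = 1%N & (g 2 : nat) = 3%N],
                [/\ (g 0 : nat) = 0%N, (g 1 : nat) = 2%N & (g 2 : nat) = 3%N] |
                [/\ (g 0 : nat) = 1%N, (g 1 : nat) = 2%N & (g 2 : nat) = 3%N]].
    have : ((g 0 : nat) = 0%N \/ (g 0 : nat) = 1%N) by lia.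
    case=> h0; [ have : ((g 1 : nat) = 1%N \/ (g 1 : nat) = 2%N) by lia | ]; last first.
      by constructor 4; split => //; lia.
    case=> h1; [ have : ((g 2 : nat) = 2%N \/ (g 2 : nat) = 3%N) by lia | ]; last first.
      by constructor 3; split => //; lia.
    by case=> h2; [constructor 1 | constructor 2].
  rewrite det3 !mxE.
  case: Df => -[-> -> ->]; case: Dg => -[-> -> ->]; rewrite /mm10 /= /R3 /=;
  first [ apply: (ig_eq _ (ig0 S)); ring
        | apply: (ig_eq _ G1); ring
        | apply: (ig_eq _ (igN G1)); ring
        | apply: (ig_eq _ G2); ring
        | apply: (ig_eq _ (igN G2)); ring
        | apply: (ig_eq _ (igN (igM (X2 + 1) G1))); ring
        | apply: (ig_eq _ (igN (igM (X2 + 1) G2))); ring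
        | apply: (ig_eq _ (igN G3)); ring
        | apply: (ig_eq _ (igB (igM Y2 G1) G3)); ring
        | apply: (ig_eq _ (igN (igD G3 (igM Y2 G1)))); ring ].
- move=> p [->| -> | -> | ->].
  + by apply: c_xx.
  + by apply: c_10a.
  + by apply: c_10b.
  + have h1 : ideal_gen (crit3_gens (joinG 2 2 0)) (X2 * Y1 + Y1) by apply: c_10a.
    have h2 : ideal_gen (crit3_gens (joinG 2 2 0)) (X2 * Y1 * Y2 - Y1 - Y2) by apply: c_9.
    apply: (ig_eq _ (igB (igMr Y2 h1) h2)); ring.
Qed.
End Case10.

Lemma case10 m n o : m = 2%N -> n = 2%N -> o = 0%N ->
  same_ideal (crit3_gens (joinG m n o)) (fun p => [\/ p = vx m n o 1%N + vx m n o 2%N + 2,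
        p = vx m n o 2%N * vy m n o 1%N + vy m n o 1%N,
        p = vx m n o 2%N * vy m n o 2%N + vy m n o 2%N
      | p = vy m n o 1%N * vy m n o 2%N + vy m n o 1%N + vy m n o 2%N]).
Proof. by move=> -> -> ->; exact: case10'. Qed.

Lemma cbip m n o : m = 1%N -> o = 1%N -> (1 <= n)%N -> graph_complete_bipartite (joinG m n o).
Proof.
move=> -> -> hn.
exists [set u : 'I_(1 + n + 1) | vcl 1 n (val u) == 1%N]; split.
- have h1 : (1 < 1 + n + 1)%N by lia.
  apply/set0Pn; exists (Ordinal h1).
  by rewrite inE /vcl /=; dec.
- have h0 : (0 < 1 + n + 1)%N by lia.
  apply/set0Pn; exists (Ordinal h0).
  by rewrite !inE /vcl /=.
move=> u v; rewrite !inE /joinG /vclass -(inj_eq val_inj) /vcl /=.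
have hu' : (u < 1 + n + 1)%N := ltn_ord u.
have hv' : (v < 1 + n + 1)%N := ltn_ord v.
have Du : (u : nat) = 0%N \/ (1 <= u <= n)%N \/ (u : nat) = n.+1 by lia.
have Dv : (v : nat) = 0%N \/ (1 <= v <= n)%N \/ (v : nat) = n.+1 by lia.
case: Du => [hu|[hu|hu]]; case: Dv => [hv|[hv|hv]]; rewrite ?hu ?hv; dec; by rewrite /= ?andbF ?andbT.
Qed.

Theorem theorem4p5 (m n o : nat) :
  (o <= m)%N -> (4 <= m + n + o)%N ->
  graph_connected (joinG m n o) ->
  ~ graph_complete (joinG m n o) ->
  ~ graph_complete_bipartite (joinG m n o) ->
  let I3 := crit3_gens (joinG m n o) in
  let x := vx m n o in let y := vy m n o in let z := vz m n o in
   ((2 <= m)%N -> (2 <= n)%N -> (2 <= o)%N ->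
     same_ideal I3 (fun p => [\/ p = 2,
        exists2 i, (0 < i <= m)%N & p = x i + 1,
        exists2 j, (0 < j <= n)%N & p = y j
      | exists2 k, (0 < k <= o)%N & p = z k + 1])) /\
   ((2 <= m)%N -> n = 1%N -> (2 <= o)%N ->
     same_ideal I3 (fun p => [\/
        exists2 i, (0 < i <= m)%N & p = x i + 1,
        p = y 1%N + 2
      | exists2 k, (0 < k <= o)%N & p = z k + 1])) /\
   ((2 <= m)%N -> (2 <= n)%N -> o = 1%N ->
     same_ideal I3 (fun p => [\/
        exists2 i, (0 < i <= m)%N & p = x i + 1,
        exists2 j, (0 < j <= n)%N & p = y j
      | p = z 1%N - 1])) /\
   (m = 1%N -> (3 <= n)%N -> o = 1%N ->
     same_ideal I3 (fun p => p = x 1%N + z 1%N \/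
        exists2 j, (0 < j <= n)%N & p = y j)) /\
   (m = 1%N -> n = 2%N -> o = 1%N ->
     same_ideal I3 (fun p => [\/ p = x 1%N + z 1%N,
        p = y 1%N + y 2%N | p = y 2%N * z 1%N])) /\
   ((2 <= m)%N -> n = 1%N -> o = 1%N ->
     same_ideal I3 (fun p =>
        (exists2 i, (0 < i <= m)%N & p = x i + 1) \/
        p = z 1%N * y 1%N + z 1%N - 1)) /\
   ((3 <= m)%N -> (3 <= n)%N -> o = 0%N ->
     same_ideal I3 (fun p =>
        (exists2 i, (0 < i <= m)%N & p = x i + 1) \/
        (exists2 j, (0 < j <= n)%N & p = y j))) /\
   (m = 2%N -> (3 <= n)%N -> o = 0%N ->
     same_ideal I3 (fun p => p = x 1%N + x 2%N + 2 \/
        exists2 j, (0 < j <= n)%N & p = y j)) /\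
   ((3 <= m)%N -> n = 2%N -> o = 0%N ->
     same_ideal I3 (fun p =>
        (exists2 i, (0 < i <= m)%N & p = x i + 1) \/
        p = y 1%N * y 2%N + y 1%N + y 2%N)) /\
   (m = 2%N -> n = 2%N -> o = 0%N ->
     same_ideal I3 (fun p => [\/ p = x 1%N + x 2%N + 2,
        p = x 2%N * y 1%N + y 1%N,
        p = x 2%N * y 2%N + y 2%N
      | p = y 1%N * y 2%N + y 1%N + y 2%N])).
Proof.
move=> hom h4 hconn hnc hnb I3 x y z.
split; first exact: case1.
split; first exact: case2.
split; first exact: case3.
split; first by move=> hm hn ho; exfalso; apply: hnb; apply: cbip => //; lia.
split; first by move=> hm hn ho; exfalso; apply: hnb; apply: cbip => //; lia.
split; first exact: case6.
split; first exact: case7.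
split; first exact: case8.
split; first exact: case9.
exact: case10.
Qed.
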